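(* Let $P$ be a finite poset and let $x \in P$ be a $\chi$-point of $P$, i.e. $\chi(P_{>x}) = 1$ where $P_{>x} = \{y \in P \mid y > x\}$. If $h, h' : P \to \mathbb{Z}$ are two functions with $h(y) = h'(y)$ for every $y \in P$ with $y \neq x$, then \[ \int_{P} h \, d\chi = \int_{P} h' \, d\chi . \]
   Context: For a finite poset $P$, the zeta function is the $P \times P$ matrix with $\zeta(x,y)=1$ if $x \le y$ and $0$ otherwise; it is invertible, and the Euler characteristic of $P$ is $\chi(P) = \sum_{x,y \in P} \zeta^{-1}(x,y)$ (this equals the Euler characteristic of the order complex of $P$; $\chi(\emptyset)=0$). A filter of $P$ is a subset $Q$ closed upward ($x \in Q$, $x \le y$ implies $y \in Q$). For a subset $Q$, $\delta_Q : P \to \mathbb{Z}$ is its indicator function. Every function $f : P \to \mathbb{Z}$ can be written as $f = \sum_i a_i \delta_{Q_i}$ with $a_i \in \mathbb{Z}$ and $Q_i$ filters of $P$; the Euler calculus (Euler integral) of $f$ is $\int_P f\, d\chi = \sum_i a_i \chi(Q_i)$, which is independent of the chosen representation. A point $x$ of $P$ is a $\chi$-point if $\chi(P_{>x}) = 1$. *)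

(* Defs.v *)
From HB Require Import structures.
From mathcomp Require Import all_boot all_order all_algebra.
From Stdlib Require Import ClassicalEpsilon.
Set Implicit Arguments. Unset Strict Implicit. Unset Printing Implicit Defensive.
Import Order.TTheory GRing.Theory Num.Theory.
Local Open Scope ring_scope.

Section EulerCalculus.
Context {disp : Order.disp_t} {T : finPOrderType disp}.

Definition zeta_mx (A : {set T}) : 'M[int]_(#|A|) :=
  \matrix_(i < #|A|, j < #|A|)
     ((@enum_val T (mem A) i <= @enum_val T (mem A) j)%O : nat)%:Z.

Definition euler_char (A : {set T}) : int :=
  \sum_(i < #|A|) \sum_(j < #|A|) (invmx (zeta_mx A)) i j.

Definition is_filter (Q : {set T}) : bool :=
  [forall x, forall y, ((x \in Q) && (x <= y)%O) ==> (y \in Q)].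

Definition delta (Q : {set T}) (y : T) : int := (y \in Q : nat)%:Z.

Definition is_euler_integral (f : T -> int) (v : int) : Prop :=
  exists s : seq (int * {set T}),
    [/\ all (fun p => is_filter p.2) s,
        forall y, f y = \sum_(p <- s) p.1 * delta p.2 y
      & v = \sum_(p <- s) p.1 * euler_char p.2].

(* The Euler integral, as the (representation-independent) value *)
Definition euler_integral (f : T -> int) : int :=
  epsilon (inhabits 0) (is_euler_integral f).

Definition strict_up (x : T) : {set T} := [set y | (x < y)%O].

Definition chi_point (x : T) : Prop := euler_char (strict_up x) = 1.

End EulerCalculus.

(* Main.v *)
Require Import Defs.
From HB Require Import structures.
From mathcomp Require Import all_boot all_order all_algebra.
From Stdlib Require Import ClassicalEpsilon.
Set Implicit Arguments. Unset Strict Implicit. Unset Printing Implicit Defensive.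
Import Order.TTheory GRing.Theory Num.Theory.
Local Open Scope ring_scope.

Section Solve.
Variables (I : finType) (r : rel I).
Hypothesis rtr : forall a b c, r a b -> r b c -> r a c.
Hypothesis rref : forall a, r a a.
Hypothesis ranti : forall a b, r a b -> r b a -> a = b.

Definition supset (v : I) := [set w | r v w && (w != v)].
Definition cnt v := #|supset v|.

Lemma cnt_le v w : r v w -> (cnt w <= cnt v)%N.
Proof.
move=> hvw; apply: subset_leq_card; apply/subsetP => u; rewrite !inE.
case/andP=> hwu nuw; rewrite (rtr hvw hwu) /=.
apply/eqP=> euv; subst u; by rewrite (ranti hvw hwu) eqxx in nuw.
Qed.

Lemma cnt_lt v w : r v w -> w != v -> (cnt w < cnt v)%N.
Proof.
move=> hvw nwv; apply: proper_card; rewrite properE; apply/andP; split.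
  apply/subsetP => u; rewrite !inE.
  case/andP=> hwu nuw; rewrite (rtr hvw hwu) /=.
  apply/eqP=> euv; subst u; by rewrite (ranti hvw hwu) eqxx in nuw.
apply/subsetPn; exists w; first by rewrite inE hvw nwv.
by rewrite inE eqxx andbF.
Qed.

Fixpoint sol (b : I -> int) (k : nat) : I -> int :=
  match k with
  | 0 => fun _ => 0
  | k.+1 => fun v => if cnt v == k then b v - \sum_(w in supset v) sol b k w
                     else sol b k v
  end.

Lemma sol_spec b k v : (cnt v < k)%N -> \sum_(w | r v w) sol b k w = b v.
Proof.
elim: k v => [//|k IH] v hv /=.
have same : forall w, (cnt w < k)%N -> sol b k.+1 w = sol b k w.
  by move=> w hw /=; rewrite ifN // neq_ltn hw.
rewrite ltnS leq_eqVlt in hv; case/orP: hv => hv.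
- rewrite (bigD1 v) //= (eqP hv) eqxx.
  rewrite [X in _ - X](eq_bigl (fun w => r v w && (w != v))); last first.
    by move=> w; rewrite inE.
  rewrite [X in _ + X](eq_bigr (sol b k)) ?subrK // => w /andP[hw nw].
  by rewrite /= ifN // neq_ltn -(eqP hv) (cnt_lt hw nw).
- rewrite -(IH v hv); apply: eq_bigr => w hw.
  by apply: same; apply: leq_ltn_trans (cnt_le hw) hv.
Qed.
Lemma sol_all b v : \sum_(w | r v w) sol b #|I|.+1 w = b v.
Proof. apply: sol_spec; rewrite ltnS; exact: max_card. Qed.
End Solve.


Section Main.
Context {disp : Order.disp_t} {T : finPOrderType disp}.

Lemma zeta_unit (A : {set T}) : zeta_mx A \in unitmx.
Proof.
set n := #|A|.
pose r := fun i j : 'I_n => (@enum_val T (mem A) i <= @enum_val T (mem A) j)%O.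
have rtr : forall a b c, r a b -> r b c -> r a c by move=> a b c; exact: le_trans.
have rref : forall a, r a a by move=> a; exact: lexx.
have ranti : forall a b, r a b -> r b a -> a = b.
  move=> a b hab hba; apply: enum_val_inj; apply/eqP; rewrite eq_le; exact/andP.
pose X := \matrix_(i < n, j < n) sol r (fun v => (v == j : nat)%:Z) n.+1 i.
suff H : zeta_mx A *m X = 1%:M by case: (mulmx1_unit H).
apply/matrixP => i j; rewrite !mxE.
rewrite (_ : ((i == j)%:R : int) = (i == j : nat)%:Z); last by case: (i == j).
have := sol_all rtr rref ranti (fun v => (v == j : nat)%:Z) i.
rewrite card_ord => <-.
rewrite [RHS]big_mkcond; apply: eq_bigr => k _; rewrite !mxE.
by rewrite /r; case: (_ <= _)%O; rewrite ?mul1r ?mul0r.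
Qed.

Variable c : T -> int.
Hypothesis hc : forall v, \sum_(w | (v <= w)%O) c w = 1.

Lemma euler_filter (Q : {set T}) : is_filter Q -> euler_char Q = \sum_(v in Q) c v.
Proof.
move=> hQ.
pose d := \col_(i < #|Q|) c (@enum_val T (mem Q) i).
have Zd : zeta_mx Q *m d = const_mx 1.
  apply/matrixP => i j; rewrite !mxE.
  have vi : @enum_val T (mem Q) i \in Q by exact: enum_valP.
  rewrite -(hc (@enum_val T (mem Q) i)).
  rewrite (eq_bigr (fun k => if (enum_val i <= enum_val k)%O then c (enum_val k) else 0)); last first.
    by move=> k _; rewrite !mxE; case: (_ <= _)%O; rewrite ?mul1r ?mul0r.
  rewrite -big_mkcond /=.
  rewrite -(big_enum_val_cond (fun w => (enum_val i <= w)%O) c) /=.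
  apply: eq_bigl => w; case h: (enum_val i <= w)%O; rewrite ?andbF ?andbT //.
  move/forallP: hQ => /(_ (enum_val i)) /forallP /(_ w); rewrite vi h /=.
  by [].
rewrite /euler_char [RHS]big_enum_val; apply: eq_bigr => i _.
have := congr1 (fun M : 'cV[int]_#|Q| => M i ord0) (congr1 (mulmx (invmx (zeta_mx Q))) Zd).
rewrite mulmxA mulVmx ?zeta_unit // mul1mx !mxE => ->.
by apply: eq_bigr => j _; rewrite !mxE mulr1.
Qed.

Lemma integral_unique f v : is_euler_integral f v -> v = \sum_y f y * c y.
Proof.
case=> s [/allP hs hf ->].
under [RHS]eq_bigr => y _ do rewrite hf big_distrl /=.
rewrite exchange_big /=; rewrite big_seq [RHS]big_seq.
apply: eq_bigr => p ps; rewrite euler_filter ?hs //.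
rewrite big_distrr /= [LHS]big_mkcond /=; apply: eq_bigr => y _.
by rewrite /delta; case: (y \in p.2); rewrite ?mulr1 ?mulr0 ?mul0r.
Qed.
End Main.

Lemma integral_exists {disp : Order.disp_t} {T : finPOrderType disp} (f : T -> int) :
  exists v, is_euler_integral f v.
Proof.
pose up (y : T) := [set z | (y <= z)%O].
pose s := [seq (f y, up y) | y <- enum T] ++ [seq (- f y, strict_up y) | y <- enum T].
exists (\sum_(p <- s) p.1 * euler_char p.2), s; split => //.
- rewrite all_cat; apply/andP; split; apply/allP => p /mapP [y _ ->] /=;
  apply/forallP => a; apply/forallP => b; apply/implyP => /andP [];
  rewrite !inE => ha hab.
  + exact: le_trans hab.
  + exact: lt_le_trans hab.
- move=> z; rewrite big_cat !big_map /= -big_split /= -enumT big_enum /=.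
  rewrite (bigD1 z) //= big1 ?addr0.
    by rewrite /delta !inE lexx ltxx /= mulr1 mulr0 subr0.
  move=> y nyz; rewrite /delta !inE lt_neqAle nyz /=.
  by case: (y <= z)%O; rewrite ?mulr1 ?mulr0 ?subrr.
Qed.

Theorem proposition4p1 (disp : Order.disp_t) (P : finPOrderType disp) (x : P)
  (hx : chi_point x) (h h' : P -> int)
  (hh : forall y : P, y != x -> h y = h' y) :
  euler_integral h = euler_integral h'.
Proof.
pose r := fun a b : P => (a <= b)%O.
have rtr : forall a b c, r a b -> r b c -> r a c by move=> a b c; exact: le_trans.
have rref : forall a, r a a by move=> a; exact: lexx.
have ranti : forall a b, r a b -> r b a -> a = b.
  by move=> a b hab hba; apply/eqP; rewrite eq_le; exact/andP.
set c := sol r (fun _ => 1) #|P|.+1.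
have hc : forall v, \sum_(w | (v <= w)%O) c w = 1.
  by move=> v; exact: (sol_all rtr rref ranti (fun _ => 1) v).
have E f : euler_integral f = \sum_y f y * c y.
  apply: (integral_unique hc); rewrite /euler_integral.
  exact: epsilon_spec (integral_exists f).
have cx : c x = 0.
  have := hc x; rewrite (bigD1 x) //=.
  move: hx; rewrite /chi_point (euler_filter hc); last first.
    apply/forallP => a; apply/forallP => b; apply/implyP => /andP [].
    rewrite !inE => ha hab; exact: lt_le_trans hab.
  rewrite (eq_bigl (fun w => (x <= w)%O && (w != x))) => [-> /eqP|w].
    by move/eqP/(congr1 (fun t => t - 1)); rewrite addrK subrr.
  by rewrite /strict_up in_set lt_def andbC.
rewrite !E; apply: eq_bigr => y _.
case: (eqVneq y x) => [->|nyx]; first by rewrite cx !mulr0.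
by rewrite hh.
Qed.
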